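(* Let $n\ge 1$, let $\beta\in[0,1)$, let $B_0\in\mathbb{R}^{n\times n}$ be symmetric positive definite, and let $P_f\in\mathbb{R}^{n\times n}$ be symmetric positive semidefinite and rank deficient. Let $B=(1-\beta)B_0+\beta P_f$. Then \[ \max\left[\frac{1}{\kappa(B_0)}+\frac{\beta\lambda_1(P_f)}{(1-\beta)\lambda_1(B_0)},\ \left(\frac{1}{\kappa(B_0)}+\frac{\beta\lambda_1(P_f)}{(1-\beta)\lambda_1(B_0)}\right)^{-1}\right]\le \kappa(B)\le \kappa(B_0)\left(1+\frac{\beta\lambda_1(P_f)}{(1-\beta)\lambda_1(B_0)}\right). \]
   Context: For a symmetric matrix $A\in\mathbb{R}^{n\times n}$, $\lambda_k(A)$ denotes its $k$-th largest eigenvalue ($\lambda_1$ largest, $\lambda_n$ smallest). For a symmetric positive definite matrix $A$, the condition number is $\kappa(A)=\lambda_1(A)/\lambda_n(A)$. *)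

(* Defs.v *)
From mathcomp Require Import all_boot all_order all_algebra.
From mathcomp.real_closed Require Import polyrcf.
Set Implicit Arguments. Unset Strict Implicit. Unset Printing Implicit Defensive.
Import Order.TTheory GRing.Theory Num.Theory.
Local Open Scope ring_scope.

Section Defs.
Variable R : rcfType.

Definition symmetric_mx n (A : 'M[R]_n) : Prop := A^T = A.

Definition spd_mx n (A : 'M[R]_n) : Prop :=
  symmetric_mx A /\ forall x : 'rV[R]_n, x != 0 -> 0 < (x *m A *m x^T) 0 0.

Definition spsd_mx n (A : 'M[R]_n) : Prop :=
  symmetric_mx A /\ forall x : 'rV[R]_n, 0 <= (x *m A *m x^T) 0 0.

Definition rank_deficient n (A : 'M[R]_n) : Prop := (\rank A < n)%N.

(* the (distinct) real eigenvalues of A, i.e. the real roots of its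
   characteristic polynomial, sorted increasingly *)
Definition real_spectrum n (A : 'M[R]_n) : seq R := rootsR (char_poly A).

(* lambda_1(A): largest eigenvalue; lambda_n(A): smallest eigenvalue
   (for symmetric A all eigenvalues are real) *)
Definition lambda_max n (A : 'M[R]_n) : R := last 0 (real_spectrum A).
Definition lambda_min n (A : 'M[R]_n) : R := head 0 (real_spectrum A).

Definition cond_num n (A : 'M[R]_n) : R := lambda_max A / lambda_min A.
End Defs.

(* Main.v *)
Require Import Defs.
From mathcomp Require Import all_boot all_order all_algebra.
From mathcomp.real_closed Require Import polyrcf.
From mathcomp.real_closed Require Import complex.
From mathcomp Require Import sesquilinear spectral.
From mathcomp Require Import ring lra.
Import Order.TTheory GRing.Theory Num.Theory.
Local Open Scope ring_scope.

Set Implicit Arguments. Unset Strict Implicit. Unset Printing Implicit Defensive.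

Section Aux.
Variable R : rcfType.

Lemma path_le_last (y : R) s x : path <=%R y s -> x \in y :: s -> x <= last y s.
Proof.
elim: s y x => [|z s IH] y x /=; first by rewrite inE => _ /eqP ->.
move=> /andP[yz pz]; rewrite inE => /orP[/eqP ->|xs].
  by apply: le_trans yz _; apply: IH pz _; rewrite mem_head.
exact: IH.
Qed.

Lemma path_le_head (y : R) s x : path <=%R y s -> x \in y :: s -> y <= x.
Proof.
elim: s y x => [|z s IH] y x /=; first by rewrite inE => _ /eqP ->.
move=> /andP[yz pz]; rewrite inE => /orP[/eqP ->//|xs].
by apply: le_trans yz _; apply: IH pz _.
Qed.

Lemma sorted_lastP (s : seq R) x : sorted <%R s -> x \in s ->
  x <= last 0 s /\ head 0 s <= x /\ last 0 s \in s /\ head 0 s \in s.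
Proof.
case: s => [//|y s] /= ps xs.
have pl : path <=%R y s by apply: sub_path ps => a b /ltW.
split; first exact: (path_le_last pl xs).
split; first exact: (path_le_head pl xs).
by split; [apply: mem_last | apply: mem_head].
Qed.

End Aux.

Section Spec.
Local Open Scope sesquilinear_scope.
Variable R : rcfType.
Local Notation C := (R[i]).
Local Notation toC := (real_complex R).

Lemma spec_facts n (A : 'M[R]_n) : symmetric_mx A -> (0 < n)%N ->
  root (char_poly A) (lambda_max A) /\ root (char_poly A) (lambda_min A) /\
  forall x : 'rV[R]_n,
    lambda_min A * (x *m x^T) 0 0 <= (x *m A *m x^T) 0 0 /\
    (x *m A *m x^T) 0 0 <= lambda_max A * (x *m x^T) 0 0.
Proof.
move=> sA n0.
have toCM : forall a b : R, toC (a * b) = toC a * toC b by move=> a b; exact: rmorphM.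
set AC : 'M[C]_n := map_mx toC A.
have herm : AC \is hermsymmx.
  apply: realsym_hermsym.
    apply/is_hermitianmxP; rewrite expr0 scale1r.
    apply/matrixP => i j; rewrite !mxE.
    by rewrite -[in LHS]sA mxE.
  apply/mxOverP => i j; rewrite mxE; apply/complex_realP; by exists (A i j).
set P := spectralmx AC; set d := spectral_diag AC.
have /orthomx_spectralP eqA := hermitian_normalmx herm.
have Pu : P \is unitarymx := spectral_unitarymx AC.
have Punit : P \in unitmx := spectral_unit AC.
have dreal : d \is a realmx := hermitian_spectral_diag_real herm.
have PA : P *m AC = diag_mx d *m P.
  by rewrite {1}eqA !mulmxA mulmxV // mul1mx.
have cp0 : char_poly A != 0 by apply: monic_neq0; apply: char_poly_monic.
have droot : forall i, root (char_poly A) (complex.Re (d 0 i)) /\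
                      d 0 i = toC (complex.Re (d 0 i)).
  move=> i; have dr : toC (complex.Re (d 0 i)) = d 0 i.
    by apply: RRe_real; apply: (mxOverP dreal).
  split=> //.
  suff: eigenvalue AC (d 0 i).
    by rewrite eigenvalue_root_char /AC -map_char_poly -dr fmorph_root.
  apply/eigenvalueP; exists (row i P).
    rewrite -row_mul PA mul_diag_mx; apply/rowP => j; rewrite !mxE //.
  rewrite rowE mulmx_free_eq0 ?row_free_unit //.
  apply/eqP => /matrixP /(_ 0 i); rewrite !mxE !eqxx /=.
  by move/eqP; rewrite oner_eq0.
have memR : forall r, root (char_poly A) r = (r \in real_spectrum A).
  by move=> r; rewrite /real_spectrum -(roots_on_rootsR cp0 r).
have so : sorted <%R (real_spectrum A) by apply: sorted_roots.
have i0 : 'I_n := Ordinal n0.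
have mem0 : complex.Re (d 0 i0) \in real_spectrum A by rewrite -memR; exact: (droot i0).1.
have [_ [_ [lastin headin]]] := sorted_lastP so mem0.
have bnd : forall j, complex.Re (d 0 j) <= lambda_max A /\ lambda_min A <= complex.Re (d 0 j).
  move=> j; have mj : complex.Re (d 0 j) \in real_spectrum A by rewrite -memR; exact: (droot j).1.
  by have [h1 [h2 _]] := sorted_lastP so mj.
split; first by rewrite memR.
split; first by rewrite memR.
move=> x.
set xC := map_mx toC x.
have xCt : xC ^t* = map_mx toC x^T.
  apply/matrixP => i j; rewrite !mxE; apply: conj_Creal; apply/complex_realP; eexists; reflexivity.
have eq1 : toC ((x *m A *m x^T) 0 0) = (xC *m AC *m xC^t*) 0 0.
  by rewrite xCt /xC /AC -!map_mxM [RHS]mxE.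
have eq2 : toC ((x *m x^T) 0 0) = (xC *m xC^t*) 0 0.
  by rewrite xCt /xC -!map_mxM [RHS]mxE.
set y := xC *m P^t*.
have e1 : xC *m AC *m xC^t* = y *m diag_mx d *m y^t*.
  by rewrite {1}eqA invmx_unitary // /y trmx_mul map_mxM trmxCK !mulmxA.
have e2 : xC *m xC^t* = y *m y^t*.
  by rewrite /y trmx_mul map_mxM trmxCK mulmxA mulmxKtV.
have s1 : (y *m diag_mx d *m y^t*) 0 0 = \sum_j d 0 j * (y 0 j * (y 0 j)^*).
  rewrite mul_mx_diag mxE; apply: eq_bigr => j _; rewrite !mxE.
  by rewrite [_ * d 0 j]mulrC -mulrA.
have s2 : (y *m y^t*) 0 0 = \sum_j (y 0 j * (y 0 j)^*).
  by rewrite mxE; apply: eq_bigr => j _; rewrite !mxE.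
split.
  rewrite -lecR toCM eq1 eq2 e1 e2 s1 s2 mulr_sumr.
  apply: ler_sum => j _; apply: ler_wpM2r; first exact: mul_conjC_ge0.
  by rewrite (droot j).2 lecR; case: (bnd j).
rewrite -lecR toCM eq1 eq2 e1 e2 s1 s2 mulr_sumr.
apply: ler_sum => j _; apply: ler_wpM2r; first exact: mul_conjC_ge0.
by rewrite (droot j).2 lecR; case: (bnd j).
Qed.
End Spec.

Section Main.
Variable R : rcfType.

Lemma nrm_gt0 n (x : 'rV[R]_n) : x != 0 -> 0 < (x *m x^T) 0 0.
Proof.
move=> xn; rewrite mxE lt_def; apply/andP; split; last first.
  by apply: sumr_ge0 => j _; rewrite mxE -expr2 sqr_ge0.
apply: contra xn; rewrite (eq_bigr (fun j => x 0 j ^+ 2)); last by move=> j _; rewrite mxE expr2.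
rewrite psumr_eq0; last by move=> j _; rewrite sqr_ge0.
move=> /allP h; apply/eqP/rowP => j; rewrite mxE.
by have := h j (mem_index_enum j); rewrite /= sqrf_eq0 => /eqP.
Qed.

Lemma qD n (x : 'rV[R]_n) (a b : R) (M N : 'M[R]_n) :
  (x *m (a *: M + b *: N) *m x^T) 0 0 = a * (x *m M *m x^T) 0 0 + b * (x *m N *m x^T) 0 0.
Proof. by rewrite mulmxDr mulmxDl -!scalemxAr -!scalemxAl [LHS]mxE !mxE. Qed.

Lemma eigv n (A : 'M[R]_n) l : root (char_poly A) l ->
  exists2 v : 'rV[R]_n, (v *m A *m v^T) 0 0 = l * (v *m v^T) 0 0 & v != 0.
Proof.
rewrite -eigenvalue_root_char => /eigenvalueP [v vA vn]; exists v => //.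
by rewrite vA -scalemxAl mxE.
Qed.

Lemma cross (x y u v : R) : 0 < y -> 0 < v -> x * v <= u * y -> x / y <= u / v.
Proof.
move=> y0 v0 h; rewrite -subr_ge0.
have yn : y != 0 by rewrite gt_eqF.
have vn : v != 0 by rewrite gt_eqF.
rewrite (_ : u / v - x / y = (u * y - x * v) / (v * y)); last by field; rewrite yn vn.
by apply: divr_ge0; [rewrite subr_ge0 | apply: mulr_ge0; apply: ltW].
Qed.

Lemma divle (l m N : R) : 0 < N -> l * N <= m * N -> l <= m.
Proof. by move=> N0; rewrite ler_pM2r. Qed.

Lemma lemma2_aux (n : nat) (hn : (1 <= n)%N) (beta : R)
    (B0 Pf : 'M[R]_n) :
  0 <= beta -> beta < 1 ->
  spd_mx B0 -> spsd_mx Pf -> rank_deficient Pf ->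
  let B := (1 - beta) *: B0 + beta *: Pf in
  let c := (cond_num B0)^-1 + beta * lambda_max Pf / ((1 - beta) * lambda_max B0) in
  Num.max c c^-1 <= cond_num B /\
  cond_num B <= cond_num B0 * (1 + beta * lambda_max Pf / ((1 - beta) * lambda_max B0)).
Proof.
move=> hb0 hb1 [sB0 pB0] [sPf pPf] rk B c.
have sB : symmetric_mx B by rewrite /symmetric_mx /B linearD !linearZ /= sB0 sPf.
have [rB01 [rB0n RB0]] := spec_facts sB0 hn.
have [rPf1 [_ RPf]] := spec_facts sPf hn.
have [rB1 [rBn RB]] := spec_facts sB hn.
set a := 1 - beta.
have ha : 0 < a by rewrite /a subr_gt0.
set a1 := lambda_max B0 in rB01 RB0 *; set an := lambda_min B0 in rB0n RB0 *.
set p1 := lambda_max Pf in rPf1 RPf *.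
set b1 := lambda_max B in rB1 RB *; set bn := lambda_min B in rBn RB *.
have qB : forall x : 'rV[R]_n, (x *m B *m x^T) 0 0 = a * (x *m B0 *m x^T) 0 0 + beta * (x *m Pf *m x^T) 0 0.
  by move=> x; rewrite /B qD.
have [z zPf zn] : exists2 z : 'rV[R]_n, z *m Pf = 0 & z != 0.
  have : kermx Pf != 0.
    by rewrite kermx_eq0 /row_free; rewrite neq_ltn rk.
  by case/rowV0Pn => v; rewrite sub_kermx => /eqP vP vn; exists v.
have an0 : 0 < an.
  have [v vq vn] := eigv rB0n; have := pB0 v vn; rewrite vq => h.
  have N0 := nrm_gt0 vn.
  by rewrite -(pmulr_lgt0 _ N0).
have p10 : 0 <= p1.
  have [v vq vn] := eigv rPf1; have := pPf v; rewrite vq => h.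
  have N0 := nrm_gt0 vn.
  by rewrite -(pmulr_lge0 _ N0).
have a1n : an <= a1.
  have [v vq vn] := eigv rB0n; have [_ h] := RB0 v; rewrite vq in h.
  exact: divle (nrm_gt0 vn) h.
have F1 : b1 <= a * a1 + beta * p1.
  have [v vq vn] := eigv rB1; have N0 := nrm_gt0 vn.
  apply: (divle N0); rewrite -vq qB.
  have [_ h1] := RB0 v; have [_ h2] := RPf v.
  have := ler_wpM2l (ltW ha) h1; have := ler_wpM2l hb0 h2;   lra.
have F2 : a * an <= bn.
  have [v vq vn] := eigv rBn; have N0 := nrm_gt0 vn.
  apply: (divle N0); rewrite -vq qB.
  have [h1 _] := RB0 v; have h2 := pPf v.
  have := ler_wpM2l (ltW ha) h1; have := mulr_ge0 hb0 h2; lra.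
have F3 : a * an + beta * p1 <= b1.
  have [v vq vn] := eigv rPf1; have N0 := nrm_gt0 vn.
  apply: (divle N0); have [_ h] := RB v; rewrite qB vq in h.
  have [h1 _] := RB0 v.
  have := ler_wpM2l (ltW ha) h1; lra.
have F4 : bn <= a * a1.
  have N0 := nrm_gt0 zn.
  apply: (divle N0); have [h _] := RB z; have z0 : (z *m Pf *m z^T) 0 0 = 0 by rewrite zPf mul0mx mxE.
  rewrite qB z0 mulr0 addr0 in h.
  have [_ h1] := RB0 z.
  have := ler_wpM2l (ltW ha) h1; lra.
have F5 : a * a1 <= b1.
  have [v vq vn] := eigv rB01; have N0 := nrm_gt0 vn.
  apply: (divle N0); have [_ h] := RB v; rewrite qB vq in h.
  have h2 := pPf v.
  have := mulr_ge0 hb0 h2; lra.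
have F6 : bn <= a * an + beta * p1.
  have [v vq vn] := eigv rB0n; have N0 := nrm_gt0 vn.
  apply: (divle N0); have [h _] := RB v; rewrite qB vq in h.
  have [_ h2] := RPf v.
  have := ler_wpM2l hb0 h2; lra.
have a10 : 0 < a1 by apply: lt_le_trans an0 a1n.
have bn0 : 0 < bn by apply: lt_le_trans F2; apply: mulr_gt0.
have aan0 : 0 < a * an + beta * p1 by apply: ltr_wpDr; [apply: mulr_ge0 | apply: mulr_gt0].
have b10 : 0 < b1 by apply: lt_le_trans F3.
have aa10 : 0 < a * a1 by apply: mulr_gt0.
have an0' : an != 0 by rewrite gt_eqF.
have a10' : a1 != 0 by rewrite gt_eqF.
have a0' : a != 0 by rewrite gt_eqF.
have cE : c = (a * an + beta * p1) / (a * a1).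
  by rewrite /c /cond_num -/a1 -/an -/p1 -/a; field; rewrite ?an0' ?a10' ?a0'.
have kE : cond_num B0 * (1 + beta * p1 / (a * a1)) = (a * a1 + beta * p1) / (a * an).
  by rewrite /cond_num -/a1 -/an; field; rewrite ?an0' ?a10' ?a0'.
rewrite kE cE /cond_num -/b1 -/bn invf_div; split.
  rewrite ge_max; apply/andP; split; apply: cross => //.
    apply: ler_pM => //; [exact: ltW | exact: ltW].
  rewrite mulrC [X in _ <= X]mulrC.
  apply: ler_pM => //; [exact: ltW | exact: ltW].
apply: cross => //; first by apply: mulr_gt0.
apply: ler_pM => //; [exact: ltW | apply: ltW; apply: mulr_gt0]. all: done.
Qed.
End Main.

Unset Implicit Arguments.

Theorem lemma2 (R : rcfType) (n : nat) (hn : (1 <= n)%N) (beta : R)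
    (B0 Pf : 'M[R]_n) :
  0 <= beta -> beta < 1 ->
  spd_mx B0 -> spsd_mx Pf -> rank_deficient Pf ->
  let B := (1 - beta) *: B0 + beta *: Pf in
  let c := (cond_num B0)^-1 + beta * lambda_max Pf / ((1 - beta) * lambda_max B0) in
  Num.max c c^-1 <= cond_num B /\
  cond_num B <= cond_num B0 * (1 + beta * lambda_max Pf / ((1 - beta) * lambda_max B0)).
Proof. exact: (@lemma2_aux R n hn beta B0 Pf). Qed.
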